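(* Let $F$ be a positive integer and $S\in\mathrm{Sat}(F)$. Then $S$ has a unique minimal $\mathrm{Sat}(F)$-system of generators, namely $$\{x\in S\setminus\{0\}\mid x<F\text{ and }\mathrm{d}_S(x)\neq\mathrm{d}_S(y)\text{ for all }y\in S\setminus\{0\}\text{ with }y<x\}.$$
   Context: A numerical semigroup is a subset $S\subseteq\mathbb{N}$ closed under addition, containing $0$, with $\mathbb{N}\setminus S$ finite; its Frobenius number $\mathrm{F}(S)$ is the largest integer not in $S$. For $A\subseteq\mathbb{N}$ and $a\in A$, let $\mathrm{d}_A(a)=\gcd\{x\in A\mid x\le a\}$. A numerical semigroup $S$ is saturated if $s+\mathrm{d}_S(s)\in S$ for all $s\in S\setminus\{0\}$. For a positive integer $F$, $\mathrm{Sat}(F)$ denotes the set of all saturated numerical semigroups $S$ with $\mathrm{F}(S)=F$. Let $\Delta(F+1)=\{0\}\cup\{x\in\mathbb{N}\mid x\ge F+1\}$. A set $X\subseteq\mathbb{N}$ is a $\mathrm{Sat}(F)$-set if $X\cap\Delta(F+1)=\emptyset$ and there exists $S\in\mathrm{Sat}(F)$ with $X\subseteq S$. For a $\mathrm{Sat}(F)$-set $X$, $\mathrm{Sat}(F)[X]$ denotes the intersection of all elements of $\mathrm{Sat}(F)$ containing $X$ (the smallest element of $\mathrm{Sat}(F)$ containing $X$). If $S=\mathrm{Sat}(F)[X]$, $X$ is a $\mathrm{Sat}(F)$-system of generators of $S$; it is minimal if $S\neq\mathrm{Sat}(F)[Y]$ for every proper subset $Y\subsetneq X$. *)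

(* Defs.v *)
From mathcomp Require Import all_boot.
Set Implicit Arguments. Unset Strict Implicit. Unset Printing Implicit Defensive.

Definition numerical_semigroup (S : pred nat) : Prop :=
  [/\ S 0, (forall x y, S x -> S y -> S (x + y)) & exists N, forall x, N <= x -> S x].

Definition frobenius (S : pred nat) (F : nat) : Prop :=
  ~~ S F /\ forall x, F < x -> S x.

Definition dgcd (A : pred nat) (a : nat) : nat :=
  \big[gcdn/0]_(0 <= x < a.+1 | A x) x.

Definition saturated (S : pred nat) : Prop :=
  forall s, S s -> s != 0 -> S (s + dgcd S s).

Definition Sat (F : nat) (S : pred nat) : Prop :=
  [/\ numerical_semigroup S, saturated S & frobenius S F].

(* X is a Sat(F)-set: X \cap Delta(F+1) = emptyset and X \subseteq S for some S in Sat(F) *)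
Definition Sat_set (F : nat) (X : pred nat) : Prop :=
  (forall x, X x -> 0 < x < F.+1) /\ exists S, Sat F S /\ {subset X <= S}.

Definition Sat_generated (F : nat) (X S : pred nat) : Prop :=
  forall x, S x <-> (forall T : pred nat, Sat F T -> {subset X <= T} -> T x).

Definition Sat_system (F : nat) (S X : pred nat) : Prop :=
  Sat_set F X /\ Sat_generated F X S.

Definition Sat_minimal_system (F : nat) (S X : pred nat) : Prop :=
  Sat_system F S X /\
  forall Y : pred nat, {subset Y <= X} -> (exists x, X x && ~~ Y x) ->
    ~ Sat_generated F Y S.

Definition msg (F : nat) (S : pred nat) : pred nat :=
  fun x => [&& S x, x != 0, x < F &
            all (fun y => (S y && (y != 0)) ==> (dgcd S x != dgcd S y)) (iota 0 x)].

(* Main.v *)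
Require Import Defs.
From mathcomp Require Import all_boot zify.

Lemma dgcd0 (A : pred nat) : dgcd A 0 = 0.
Proof. by rewrite /dgcd big_mkcond big_nat1; case: (A 0). Qed.

Lemma dgcdS (A : pred nat) a : dgcd A a.+1 = gcdn (dgcd A a) (if A a.+1 then a.+1 else 0).
Proof. by rewrite /dgcd big_mkcond big_nat_recr //= -big_mkcond. Qed.

Lemma dvd_dgcd (A : pred nat) a z : A z -> z <= a -> dgcd A a %| z.
Proof.
move=> Az; elim: a => [|a IH]; first by rewrite leqn0 => /eqP ->; rewrite dvdn0.
rewrite dgcdS leq_eqVlt => /orP [/eqP zE|]; first by rewrite -zE Az dvdn_gcdr.
by rewrite ltnS => /IH; apply: dvdn_trans; apply: dvdn_gcdl.
Qed.

Lemma dgcd_dvd (A : pred nat) a D : (forall z, A z -> z <= a -> D %| z) -> D %| dgcd A a.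
Proof.
elim: a => [|a IH] H; first by rewrite dgcd0 dvdn0.
rewrite dgcdS dvdn_gcd IH; last by move=> z Az za; apply: H; rewrite // ltnW.
by case Aa: (A a.+1); rewrite ?dvdn0 // H.
Qed.

Lemma dgcd_mono (A : pred nat) x y : y <= x -> dgcd A x %| dgcd A y.
Proof. by move=> yx; apply: dgcd_dvd => z Az zy; apply: dvd_dgcd; rewrite // (leq_trans zy). Qed.

Lemma dgcd_eq (A : pred nat) x y : y <= x -> (forall z, A z -> z <= x -> dgcd A y %| z) ->
  dgcd A x = dgcd A y.
Proof.
move=> yx H; apply/eqP; rewrite eqn_dvd dgcd_mono //=; exact: dgcd_dvd.
Qed.

Lemma dgcd_pos (A : pred nat) y : A y -> 0 < y -> 0 < dgcd A y.
Proof.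
move=> Ay y0; have := @dvd_dgcd A y y Ay (leqnn y).
by case: (dgcd A y) => //; rewrite dvd0n => /eqP y0e; rewrite y0e in y0.
Qed.

Lemma sat_mult (S : pred nat) s x : saturated S -> S s -> 0 < s -> s <= x -> dgcd S s %| x -> S x.
Proof.
move=> sat Ss s0 sx dx.
case: (ltngtP s x) sx => [sx _| //| e _]; last by rewrite -e.
have ex : exists y, [&& S y, s <= y & y < x] by exists s; rewrite Ss leqnn sx.
have bd : forall y, [&& S y, s <= y & y < x] -> y <= x by move=> y /and3P[_ _ /ltnW].
case: (ex_maxnP ex bd) => y /and3P [Sy sy yx] ymax.
have y0 : y != 0 by rewrite -lt0n (leq_trans s0).
have Syd := sat y Sy y0.
have dpos := @dgcd_pos S y Sy (leq_trans s0 sy).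
have dy : dgcd S y %| y by apply: dvd_dgcd.
have dxx : dgcd S y %| x by apply: dvdn_trans dx; apply: dgcd_mono.
have dxy : dgcd S y %| x - y by rewrite dvdn_sub.
have le : dgcd S y <= x - y by apply: dvdn_leq; rewrite // subn_gt0.
case: (ltngtP (y + dgcd S y) x) => h.
- have := ymax _ (introT and3P (And3 Syd (leq_trans sy (leq_addr _ _)) h)). lia.
- lia.
- by rewrite -h.
Qed.
Set Implicit Arguments. Unset Strict Implicit.

Lemma msg_lt F (S : pred nat) x y : msg F S x -> S y -> 0 < y -> y < x -> dgcd S x != dgcd S y.
Proof.
move=> /and4P [_ _ _ /allP H] Sy y0 yx.
have := H y; rewrite mem_iota add0n yx Sy -lt0n y0 => /(_ isT) //.
Qed.

Lemma Mkey F (S : pred nat) x s : msg F S x -> S s -> 0 < s -> s < x -> dgcd S s %| x -> False.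
Proof.
move=> Mx Ss s0 sx dx.
have ex : exists y, [&& S y, s <= y & y < x] by exists s; rewrite Ss leqnn sx.
have bd : forall y, [&& S y, s <= y & y < x] -> y <= x by move=> y /and3P[_ _ /ltnW].
case: (ex_maxnP ex bd) => y /and3P [Sy sy yx] ymax.
have := msg_lt Mx Sy (leq_trans s0 sy) yx; apply/negP; rewrite negbK; apply/eqP.
apply: dgcd_eq; first exact: ltnW.
move=> z Sz zx; case: (ltngtP z x) zx => // [zx _|zx _].
- apply: dvd_dgcd => //; case: (leqP s z) => sz.
  + by apply: ymax; rewrite Sz sz zx.
  + exact: leq_trans (ltnW sz) sy.
- by rewrite zx; apply: dvdn_trans dx; apply: dgcd_mono.
Qed.

Lemma minus_sat F (S : pred nat) x : Sat F S -> msg F S x -> Sat F (fun z => S z && (z != x)).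
Proof.
move=> [[S0 Sadd [N HN]] sat [nF fF]] Mx.
have [Sx x0 xF] : [/\ S x, x != 0 & x < F] by case/and4P: Mx.
split; [split| |split].
- by rewrite S0 eq_sym.
- move=> a b /andP [Sa ax] /andP [Sb bx]; rewrite Sadd //=.
  case: (posnP a) => [->|a0]; first by rewrite add0n.
  case: (posnP b) => [->|b0]; first by rewrite addn0.
  apply/eqP => e.
  apply: (Mkey (s := maxn a b) Mx).
  + by rewrite /maxn; case: ltnP.
  + lia.
  + lia.
  + rewrite -e dvdn_add //; apply: dvd_dgcd => //; lia.
- exists (maxn N x.+1) => z Hz; rewrite HN; last lia.
  apply/eqP => e; lia.
- move=> s /andP [Ss sx] s0 /=.
  have eqT : forall t, dgcd (fun z => S z && (z != x)) t %| dgcd S t ->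
              dgcd S t %| dgcd (fun z => S z && (z != x)) t.
    move=> t _; apply: dgcd_dvd => z /andP [Sz _] zt; exact: dvd_dgcd.
  case: (ltngtP s x) sx => // [sx _|sx _].
  + have E : dgcd (fun z => S z && (z != x)) s = dgcd S s.
      apply/eqP; rewrite eqn_dvd eqT ?andbT; last first.
        by apply: dgcd_dvd => z Sz zs; apply: dvd_dgcd => //; rewrite Sz; apply/eqP => e; lia.
      apply: dgcd_dvd => z Sz zs; apply: dvd_dgcd => //; rewrite Sz; apply/eqP => e; lia.
    rewrite E sat //=; apply/eqP => e.
    apply: (Mkey Mx Ss) => //; first by rewrite lt0n.
    by rewrite -e dvdn_add // dvd_dgcd.
  + apply/andP; split; last by apply/eqP => e; lia.
    apply: (@sat_mult S s) => //; first by rewrite lt0n.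
    * exact: leq_addr.
    * rewrite dvdn_add //; first exact: dvd_dgcd.
      by apply: dgcd_dvd => z /andP [Sz _] zt; exact: dvd_dgcd.
- by rewrite negb_and nF.
- by move=> z Fz; rewrite fF //; apply/eqP => e; lia.
Qed.

Lemma Mdiv F (S : pred nat) a D : a < F ->
  (forall w, msg F S w -> w <= a -> D %| w) -> forall z, S z -> z <= a -> D %| z.
Proof.
move=> aF H z; elim/ltn_ind: z => z IH Sz za.
case: (posnP z) => [->|z0]; first exact: dvdn0.
case Mz: (msg F S z); first exact: H.
move: Mz; rewrite /msg Sz -lt0n z0 (leq_ltn_trans za aF) /= => /negbT /allPn [y].
rewrite mem_iota add0n negb_imply => yz /andP [/andP [Sy y0] /negPn /eqP e].
apply: dvdn_trans (@dvd_dgcd S z z Sz (leqnn z)).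
rewrite e; apply: dgcd_dvd => w Sw wy; apply: IH => //; lia.
Qed.

Lemma gen F (S : pred nat) : Sat F S -> Sat_generated F (msg F S) S.
Proof.
move=> HS x; split; last first.
  by move=> H; apply: H => // y; rewrite !unfold_in => /and4P [].
move=> Sx T HT sub.
have [[S0 _ _] _ [nF fF]] := HS.
have [[T0 _ _] satT [_ fT]] := HT.
case: (ltngtP x F) => [xF | Fx | xF]; last by rewrite -xF Sx in nF.
- case: (posnP x) => [->//|x0].
  have ex : exists m, S m && (m != 0) && (dgcd S m == dgcd S x).
    by exists x; rewrite Sx -lt0n x0 eqxx.
  case: (ex_minnP ex) => m /andP [/andP [Sm m0] /eqP em] mmin.
  have mx : m <= x by apply: mmin; rewrite Sx -lt0n x0 eqxx.
  have Mm : msg F S m.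
    rewrite /msg Sm m0 (leq_ltn_trans mx xF) /=; apply/allP => y.
    rewrite mem_iota add0n /= => ym; apply/implyP => /andP [Sy y0].
    apply/negP => /eqP e.
    have := mmin y; rewrite Sy y0 -em -e eqxx /= => /(_ isT); lia.
  have Tm : T m by have := sub m; rewrite !unfold_in; apply.
  apply: (@sat_mult T m x) => //; first by rewrite lt0n.
  apply: dvdn_trans (_ : dgcd S m %| x); last by rewrite em; exact: dvd_dgcd.
  apply: dgcd_dvd => z Sz zm.
  apply: (@Mdiv F S m) => // [|w Mw wm]; first exact: leq_ltn_trans mx xF.
  apply: dvd_dgcd => //; have := sub w; rewrite !unfold_in; apply; exact: Mw.
- exact: fT.
Qed.

Theorem proposition41 (F : nat) (S : pred nat) :
  0 < F -> Sat F S ->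
  Sat_minimal_system F S (msg F S) /\
  (forall X : pred nat, Sat_minimal_system F S X -> X =1 msg F S).
Proof.
move=> F0 HS.
have MS : forall y, msg F S y -> S y by move=> y /and4P [].
split.
- split; first split; first split.
  + move=> y /and4P [_ y0 yF _]; rewrite lt0n y0 /=; exact: ltnW.
  + by exists S; split => // y; rewrite !unfold_in; apply: MS.
  + exact: gen.
  + move=> Y subY [x /andP [Mx nYx]] HY.
    have := (HY x).1 (MS _ Mx) _ (minus_sat HS Mx).
    rewrite eqxx andbF => H; suff: false by []; apply: H => y; rewrite !unfold_in => Yy.
    have := subY y; rewrite !unfold_in => /(_ Yy) /MS ->.
    by apply/eqP => e; rewrite -e Yy in nYx.
- move=> X [[[Xrng _] genX] minX].
  have XS : forall z, X z -> S z.
    by move=> z Xz; apply/(genX z) => T _ sub; have := sub z; rewrite !unfold_in; apply.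
  have MX : forall x, msg F S x -> X x.
    move=> x Mx; apply/negPn/negP => nXx.
    have := (genX x).1 (MS _ Mx) _ (minus_sat HS Mx).
    rewrite eqxx andbF => H; suff: false by []; apply: H => y; rewrite !unfold_in => Xy.
    rewrite XS //; by apply/eqP => e; rewrite -e Xy in nXx.
  move=> x; apply/idP/idP; last exact: MX.
  move=> Xx; apply/negPn/negP => nMx.
  apply: (minX (msg F S)).
  + by move=> y; rewrite !unfold_in; apply: MX.
  + by exists x; rewrite Xx.
  + exact: gen.
Qed.
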